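(* Let $n\ge 2$ and let $G$ be a graph on $2n+1$ vertices with at least $n^2+n$ edges that contains no two distinct vertices of the same degree joined by a path of length three. Let $\beta$ be the largest integer such that $G$ contains two distinct vertices of degree $\beta$. Then $\beta\ge 3$.
   Context: A path of length three joining vertices $a$ and $b$ is a path $a\,x\,y\,b$ with four distinct vertices and three edges. Graphs are finite and simple. *)

(* Defs.v *)
From mathcomp Require Import all_boot.
Set Implicit Arguments. Unset Strict Implicit. Unset Printing Implicit Defensive.

Definition simple_graph (T : finType) (e : rel T) : Prop :=
  irreflexive e /\ symmetric e.

Definition edges (T : finType) (e : rel T) : {set {set T}} :=
  [set [set x; y] | x in T, y in T & e x y].

Definition deg (T : finType) (e : rel T) (x : T) : nat := #|[set y | e x y]|.

Definition path3 (T : finType) (e : rel T) (a b : T) : Prop :=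
  exists x y : T,
    uniq [:: a; x; y; b] /\ e a x /\ e x y /\ e y b.

Definition repeated_degree (T : finType) (e : rel T) (k : nat) : Prop :=
  exists u v : T, u != v /\ deg e u = k /\ deg e v = k.

(* Main.v *)
Require Import Defs.
From mathcomp Require Import all_boot zify.

Lemma sub_sum_nat (m : nat) (P Q : pred 'I_m) (F : 'I_m -> nat) :
  (forall i, P i -> Q i) -> \sum_(i | P i) F i <= \sum_(i | Q i) F i.
Proof.
move=> PQ; rewrite [X in _ <= X](bigID P) /=.
rewrite (eq_bigl P); first exact: leq_addr.
by move=> i /=; case Pi: (P i); rewrite ?andbT ?andbF // PQ.
Qed.

Lemma sum_inj_bound (T : finType) (X : {set T}) (f : T -> nat) (m : nat)
   (P : pred nat) :
  {in X &, injective f} -> (forall x, x \in X -> f x < m.+1 /\ P (f x)) ->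
  \sum_(x in X) f x <= \sum_(j < m.+1 | P j) j.
Proof.
move=> injf Hf.
pose h := fun x => (inord (f x) : 'I_m.+1).
have hK : forall x, x \in X -> (h x : nat) = f x.
  by move=> x /Hf [lt _]; rewrite /h inordK.
rewrite (eq_bigr (fun x => (h x : nat))); last by move=> x /hK.
rewrite -(big_imset (fun j : 'I_m.+1 => (j : nat))); last first.
  move=> x y Hx Hy /(congr1 val) /=; rewrite !hK // => /injf; exact.
apply: sub_sum_nat => j /imsetP [x Hx ->]; rewrite hK //; exact: (Hf x Hx).2.
Qed.

Lemma tri_sum (m : nat) : (\sum_(j < m) (j : nat)).*2 = m * m.-1.
Proof.
elim: m => [|m IH]; first by rewrite big_ord0.
rewrite big_ord_recr /= doubleD IH. case: m {IH} => //= m. lia.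
Qed.

Lemma card_pairs (T : finType) (e : rel T) :
  #|[set p : T * T | e p.1 p.2]| = \sum_x deg e x.
Proof.
rewrite -sum1_card big_mkcond /=.
transitivity (\sum_x \sum_y (if e x y then 1 else 0)).
  rewrite pair_bigA /=; apply: eq_bigr => p _; by rewrite inE.
apply: eq_bigr => x _; rewrite /deg -sum1_card big_mkcond /=.
by rewrite [RHS]big_mkcond; apply: eq_bigr => y _; rewrite !inE.
Qed.

Lemma handshake (T : finType) (e : rel T) : simple_graph e ->
  2 * #|edges e| <= \sum_x deg e x.
Proof.
move=> [irr sym].
rewrite -card_pairs.
set P := [set p : T * T | e p.1 p.2].
set Plt := [set p in P | enum_rank p.1 < enum_rank p.2].
pose g := fun p : T * T => [set p.1; p.2].
have rk : forall x y : T, e x y -> (enum_rank x < enum_rank y) || (enum_rank y < enum_rank x).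
  move=> x y exy; rewrite -neq_ltn; apply/negP => /eqP H; move: (enum_rank_inj (val_inj H)) => exy'.
  by rewrite exy' irr in exy.
have E1 : edges e \subset g @: Plt.
  apply/subsetP => s /imset2P [x y _]; rewrite !inE /= => exy ->.
  case/orP: (rk x y exy) => H.
    by apply/imsetP; exists (x, y); rewrite // !inE /= exy H.
  apply/imsetP; exists (y, x); first by rewrite !inE /= sym exy H.
  by rewrite /g /= setUC.
have E2 : edges e \subset g @: (P :\: Plt).
  apply/subsetP => s /imset2P [x y _]; rewrite !inE /= => exy ->.
  case/orP: (rk x y exy) => H.
    apply/imsetP; exists (y, x); last by rewrite /g /= setUC.
    rewrite !inE /= sym exy /= andbT -leqNgt; exact: ltnW.
  apply/imsetP; exists (x, y) => //.
  by rewrite !inE /= exy /= andbT -leqNgt; exact: ltnW.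
have C1 := leq_trans (subset_leq_card E1) (leq_imset_card _ _).
have C2 := leq_trans (subset_leq_card E2) (leq_imset_card _ _).
have : #|P :&: Plt| + #|P :\: Plt| = #|P| by exact: cardsID.
have -> : P :&: Plt = Plt.
  by apply/setIidPr/subsetP => p; rewrite inE => /andP [].
lia.
Qed.

Lemma sum_compl2 (m : nat) (P : pred nat) (i1 i2 : nat) :
  i1 < m.+1 -> i2 < m.+1 -> i1 != i2 -> ~~ P i1 -> ~~ P i2 ->
  \sum_(j < m.+1 | P j) (j : nat) + i1 + i2 <= \sum_(j < m.+1) (j : nat).
Proof.
move=> l1 l2 ne P1 P2.
rewrite [X in _ <= X](bigID (fun j : 'I_m.+1 => P j)) /=.
rewrite [\sum_(i < m.+1 | ~~ P i) _](bigD1 (inord i1)) /=; last by rewrite inordK.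
rewrite [\sum_(i < m.+1 | ~~ P i && _) _](bigD1 (inord i2)) /=; last first.
  rewrite !inordK // P2 /=; apply/eqP; move/(congr1 val); rewrite /= !inordK // => E; by rewrite E eqxx in ne.
rewrite !inordK //; lia.
Qed.

Theorem lemma2p4 (n : nat) (T : finType) (e : rel T) (beta : nat) :
  2 <= n ->
  simple_graph e ->
  #|T| = 2 * n + 1 ->
  n ^ 2 + n <= #|edges e| ->
  (forall a b : T, a != b -> deg e a = deg e b -> ~ path3 e a b) ->
  repeated_degree e beta ->
  (forall k, repeated_degree e k -> k <= beta) ->
  3 <= beta.
Proof.
move=> n2 sg cardT nedges nopath _ maxb.
have [irr sym] := sg.
rewrite leqNgt; apply/negP => bl.
have Hinj : forall u w, 3 <= deg e u -> deg e u = deg e w -> u = w.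
  move=> u w du duw; apply/eqP; apply/negP => /negP neq.
  have : deg e u <= beta by apply: maxb; exists u, w.
  lia.
have Nsub : forall x, [set y | e x y] \subset [set~ x].
  by move=> x; apply/subsetP => y; rewrite !inE => exy; apply/eqP => yx; rewrite yx irr in exy.
have degb : forall x, deg e x <= 2 * n.
  move=> x; rewrite /deg; apply: leq_trans (subset_leq_card (Nsub x)) _.
  by rewrite cardsC1 cardT addn1.
have hs := @handshake T e sg.
have sumlow : 2 * n ^ 2 + 2 * n <= \sum_x deg e x by lia.
set S := [set x | 3 <= deg e x].
have [v dv] : exists v, deg e v = 2 * n.
  case: (pickP (fun x => deg e x == 2 * n)) => [v /eqP dv|Hall]; first by exists v.
  exfalso.
  have dl : forall x, deg e x < 2 * n.
    by move=> x; rewrite ltn_neqAle degb andbT Hall.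
  have B1 : \sum_x deg e x <= \sum_x (2 + (if x \in S then deg e x - 2 else 0)).
    by apply: leq_sum => x _; rewrite inE; case: ifP => //; lia.
  rewrite big_split /= sum_nat_const -big_mkcond /= in B1.
  have B2 : \sum_(x in S) (deg e x - 2) <= \sum_(j < (2 * n - 3).+1 | true) j.
    apply: (@sum_inj_bound T S (fun x => deg e x - 2) (2 * n - 3) predT).
      move=> x y; rewrite !inE => Hx Hy H; apply: Hinj => //; lia.
    by move=> x; rewrite inE => Hx; split => //; have := dl x; lia.
  have B3 := tri_sum (2 * n - 3).+1.
  rewrite cardT in B1.
  have : (2 * n - 3).+1.-1 = 2 * n - 3 by []. move=> E; rewrite E in B3.
  nia.
have adj : forall y, y != v -> e v y.
  have : [set y | e v y] == [set~ v].
    by rewrite eqEcard Nsub cardsC1 cardT addn1 /= -dv /deg.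
  move=> /eqP EN y yv; have : y \in [set~ v] by rewrite !inE.
  by rewrite -EN inE.
set A := [set x | deg e x == 2].
have vA : v \notin A by rewrite inE dv; lia.
have adjA : forall a b, a \in A -> b \in A -> a != b -> e a b.
  move=> a b; rewrite !inE => /eqP da /eqP db ab.
  have av : a != v by apply/eqP => E; move: da; rewrite E dv; lia.
  have bv : b != v by apply/eqP => E; move: db; rewrite E dv; lia.
  have [x [ex xv]] : exists x, e a x /\ x != v.
    have /cards2P [x1 [x2 [x12 E]]] : #|[set y | e a y]| == 2 by rewrite /deg in da; rewrite da.
    have h1 : x1 \in [set y | e a y] by rewrite E !inE eqxx.
    rewrite inE in h1.
    have h2 : x2 \in [set y | e a y] by rewrite E !inE eqxx orbT.
    rewrite inE in h2.
    case: (eqVneq x1 v) => [E1|]; last by exists x1.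
    by exists x2; split => //; rewrite -E1 eq_sym.
  case: (eqVneq x b) => [<- //|xb].
  exfalso; apply: (nopath a b ab); first by rewrite da db.
  have ax : a != x by apply/eqP => E; rewrite -E irr in ex.
  exists x, v; split.
    by rewrite /= !inE !negb_or av ab xv xb (eq_sym v b) bv ax.
  split => //; split; first by rewrite sym adj.
  exact: adj.
have Na : forall a b, a \in A -> b \in A -> a != b -> [set y | e a y] :\ v = [set b].
  move=> a b Aa Ab ab; apply/eqP; rewrite eq_sym eqEcard.
  have av : a != v by apply/eqP => E; rewrite E (negbTE vA) in Aa.
  have bv : b != v by apply/eqP => E; rewrite E (negbTE vA) in Ab.
  rewrite cards1; apply/andP; split.
    by rewrite sub1set !inE bv adjA.
  have := cardsD1 v [set y | e a y]; rewrite inE sym adj //.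
  move: Aa; rewrite inE /deg => /eqP ->; lia.
have cardA : #|A| <= 2.
  case: (set_0Vmem A) => [->|[a Aa]]; first by rewrite cards0.
  rewrite (cardsD1 a) Aa.
  case: (set_0Vmem (A :\ a)) => [->|[b]]; first by rewrite cards0.
  rewrite in_setD1 => /andP [ba Ab].
  have : A :\ a \subset [set b].
    apply/subsetP => c; rewrite in_setD1 => /andP [ca Ac].
    have cv : c != v by apply/eqP => E; rewrite E (negbTE vA) in Ac.
    have : c \in [set y | e a y] :\ v by rewrite !inE cv adjA // eq_sym.
    by rewrite (Na a b) // ?inE // eq_sym.
  move/subset_leq_card; rewrite cards1; lia.
have noW : (exists w, deg e w = 2 * n - 1) -> #|A| <= 1.
  move=> [w dw]; rewrite leqNgt; apply/negP => A2.
  have /cards2P [a [b [ab EA]]] : #|A| == 2 by apply/eqP; lia.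
  have Aa : a \in A by rewrite EA !inE eqxx.
  have Ab : b \in A by rewrite EA !inE eqxx orbT.
  have wv : w != v by apply/eqP => E; move: dw; rewrite E dv; lia.
  have wa : w != a by apply/eqP => E; move: Aa; rewrite inE -E dw; lia.
  have wb : w != b by apply/eqP => E; move: Ab; rewrite inE -E dw; lia.
  have nwa : ~~ e w a.
    apply/negP => ewa; have : w \in [set y | e a y] :\ v by rewrite !inE wv sym.
    by rewrite (Na a b) // inE (negbTE wb).
  have ba : b != a by rewrite eq_sym.
  have nwb : ~~ e w b.
    apply/negP => ewb; have : w \in [set y | e b y] :\ v by rewrite !inE wv sym.
    by rewrite (Na b a) // inE (negbTE wa).
  have sub : [set y | e w y] \subset ([set~ w] :\ a) :\ b.
    apply/subsetP => y; rewrite !inE => ewy.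
    apply/and3P; split.
    - by apply/eqP => E; move: nwb; rewrite -E ewy.
    - by apply/eqP => E; move: nwa; rewrite -E ewy.
    - by apply/eqP => E; rewrite E irr in ewy.
  have c1 := cardsD1 a [set~ w]; have c2 := cardsD1 b ([set~ w] :\ a).
  rewrite !inE (eq_sym a w) wa in c1; rewrite !inE (eq_sym b w) wb ba in c2.
  rewrite cardsC1 cardT in c1.
  have := subset_leq_card sub; rewrite -/(deg e w) dw; lia.
have B1 : \sum_x deg e x <= \sum_x (1 + (x \in A) + (if x \in S then deg e x - 1 else 0)).
  apply: leq_sum => x _; rewrite !inE.
  case: (eqVneq (deg e x) 2) => [->//|H]; case: ifP => /= H2; lia.
rewrite big_split big_split /= sum_nat_const cardT -big_mkcond /= in B1.
rewrite sum1_card -big_mkcond /= in B1.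
have inj1 : {in S &, injective (fun x => deg e x - 1)}.
  move=> x y; rewrite !inE => Hx Hy H; apply: Hinj => //; lia.
case: (pickP (fun x => deg e x == 2 * n - 1)) => [w /eqP dw|Hall].
  have A1 := noW (ex_intro _ w dw).
  have B2 : \sum_(x in S) (deg e x - 1) <= \sum_(j < (2 * n - 1).+1 | 2 <= j) j.
    apply: (@sum_inj_bound T S (fun x => deg e x - 1) (2 * n - 1) (fun j => 2 <= j)) => //.
    by move=> x; rewrite inE => Hx; have := degb x; split; lia.
  have B3 := @sum_compl2 (2 * n - 1) (fun j => 2 <= j) 1 0 ltac:(lia) ltac:(lia) isT isT isT.
  have B4 := tri_sum (2 * n - 1).+1.
  have : (2 * n - 1).+1.-1 = 2 * n - 1 by []. move=> E; rewrite E in B4.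
  nia.
have B2 : \sum_(x in S) (deg e x - 1) <=
    \sum_(j < (2 * n - 1).+1 | (2 <= j) && ((j : nat) != 2 * n - 2)) j.
  apply: (@sum_inj_bound T S (fun x => deg e x - 1) (2 * n - 1)
            (fun j => (2 <= j) && (j != 2 * n - 2))) => //.
  move=> x; rewrite inE => Hx; have := degb x; have := Hall x; rewrite /= => /negbT H.
  split; lia.
have B3 := @sum_compl2 (2 * n - 1) (fun j => (2 <= j) && (j != 2 * n - 2)) 1 (2 * n - 2)
   ltac:(lia) ltac:(lia) ltac:(lia) isT ltac:(by rewrite /= eqxx andbF).
have B4 := tri_sum (2 * n - 1).+1.
have : (2 * n - 1).+1.-1 = 2 * n - 1 by []. move=> E; rewrite E in B4.
nia.
Qed.
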